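(* Assume (A) and (D), and that for some $\omega\ge0$ the potential profile satisfies: for every $c>0$ and $\lambda\ge1$, $\limsup_{s\to0^+}\frac{g(f^{-1}(cs^\lambda))}{g(f^{-1}(s))}\le\lambda^\omega$. Fix $t>0$. Let $\eta,\sigma:[0,\infty)\to(0,\infty)$ be continuous increasing functions with $1/\eta\in L^1((1,\infty),dx)$, $\sigma(r)<r$ for $r\ge1$, $\sup_{r\ge1}f(\sigma(r))/f(r)<\infty$, and such that $r\mapsto\frac{(d-1)\log r+\log\eta(r)}{|\log f(r)|}$ is eventually decreasing with $$b:=\lim_{r\to\infty}\frac{(d-1)\log r+\log\eta(r)}{|\log f(r)|}\in[0,2).$$ Let $H_t(r)=f^2(r)r^{d-1}\eta(r)\exp(\widetilde Ktg(r))$, $\widetilde w_t(r)=g^2(r)\exp(\widetilde Ktg(r))$, $v_t(r)=\widetilde w_t(r)\frac{\eta(r)}{r-\sigma(r)}$. Let $\kappa,\widetilde\kappa>0$, $\alpha_t(u)=(f^2)^{-1}(\kappa/u)$ and $\gamma_t(u)=H_t^{-1}(\widetilde\kappa/u)$ for $u$ large enough, $H_t^{-1}$ being the inverse of $H_t$ restricted to a half-line on which it is continuous and strictly decreasing (such a half-line exists). (a) For every $\varepsilon\in(0,2-b)$ there is $r_\varepsilon>0$ with $f^2(r)\le H_t(r)\le f^{2-b-\varepsilon}(r)$ for $r>r_\varepsilon$; moreover $$1\le\liminf_{u\to\infty}\frac{g(\gamma_t(u))}{g(\alpha_t(u))}\le\limsup_{u\to\infty}\frac{g(\gamma_t(u))}{g(\alpha_t(u))}\le\Big(\frac{2}{2-b}\Big)^{\omega},$$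 and for every $\delta>0$, $\lim_{u\to\infty}\widetilde w_t(\gamma_t(u))/u^\delta=0$. (b) If in addition $\lim_{r\to\infty}\frac{\log\eta(r)-\log(r-\sigma(r))}{g(r)}=0$, then $$\lim_{u\to\infty}\frac{\log\eta(\gamma_t(u))-\log(\gamma_t(u)-\sigma(\gamma_t(u)))}{g(\alpha_t(u))}=0$$ and for every $\delta>0$, $\lim_{u\to\infty}v_t(\gamma_t(u))/u^\delta=0$.
   Context: Setting. Fix $d\ge1$. Let $A$ be a positive semidefinite $d\times d$ matrix and $\nu$ a symmetric Lévy measure on $\mathbb R^d\setminus\{0\}$ (positive Radon measure with $\int(1\wedge|z|^2)\,\nu(dz)<\infty$, $\nu(-B)=\nu(B)$) with $\nu(\mathbb R^d\setminus\{0\})=\infty$, absolutely continuous with density also denoted $\nu(x)$. The Lévy operator $L$ on $L^2(dx)$ is the Fourier multiplier $\widehat{Lh}(\xi)=-\Psi(\xi)\widehat h(\xi)$ with $\Psi(\xi)=\tfrac12A\xi\cdot\xi+\int(1-\cos(\xi\cdot z))\,\nu(dz)$; $\{P_t\}_{t\ge0}$ is the associated convolution semigroup, $P_th(x)=\int p_t(y-x)h(y)\,dy$ with densities $p_t$. Let $V$ be locally bounded on $\mathbb R^d$ with $V(x)\to\infty$ as $|x|\to\infty$, and let $H=-L+V$ (self-adjoint, bounded below, defined via quadratic forms on $L^2(dx)$). For $t>0$, $e^{-tH}$ has a continuous, positive, symmetric kernel $u_t(x,y)$. Let $\lambda_0=\inf\sigma(H)$ (a simple eigenvalue) and $\varphi_0$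 the corresponding strictly positive, continuous, bounded eigenfunction with $\|\varphi_0\|_{L^2(dx)}=1$. Set $\mu(dx)=\varphi_0^2(x)\,dx$ (a probability measure), $q_t(x,y)=\dfrac{e^{\lambda_0t}u_t(x,y)}{\varphi_0(x)\varphi_0(y)}$ and $Q_th(x)=\int q_t(x,y)h(y)\,\mu(dy)$; $\{Q_t\}$ is a semigroup of contractions on every $L^p(\mu)$, $1\le p\le\infty$, and $q_t$ is symmetric. Assumption (A): there exist a strictly decreasing continuous $f:(0,\infty)\to(0,\infty)$, a strictly increasing continuous $g:[0,\infty)\to(0,\infty)$, constants $C_1,C_2\ge1$ and $R_0>0$ such that $C_1^{-1}f(|x|)\le\nu(x)\le C_1f(|x|)$ for $x\ne0$ and $C_2^{-1}g(|x|)\le V(x)\le C_2g(|x|)$ for $|x|\ge R_0$, and moreover: (A1) there is $C_3>0$ with $\int_{\{|x-y|>1,\,|y|>1\}}f(|x-y|)f(|y|)\,dy\le C_3f(|x|)$ for $|x|\ge1$; (A2) $(t,x)\mapsto p_t(x)$ is continuous on $(0,\infty)\times\mathbb R^d$ and for every $t_b>0$ there are $C_4,C_5>0$ with $p_t(x)\le C_4\big([e^{C_5t}f(|x|)]\wedge1\big)$ for $x\neq0$, $t\ge t_b$, and $\sup_{t\in(0,t_b]}\sup_{r\le|x|\le2}p_t(x)<\infty$ for every $r\in(0,1]$; (A3) there is $C_6\ge1$ with $g(r+1)\le C_6g(r)$ for $r\ge R_0$. Under (A), $f$ is a bijection of $(0,\infty)$ onto $(0,\infty)$ and $f^{-1}$,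 $(f^2)^{-1}$ denote the inverses. We write $f_1=f\wedge1$. Condition (D): the map $r\mapsto g(r)/|\log f(r)|$ is eventually decreasing and $\lim_{r\to\infty}g(r)/|\log f(r)|=0$. Heat kernel estimate (a known consequence of (A), used as standing input): for every $T>0$ there exist $\rho>1$, $C=C(T)>0$ and constants $K,\widetilde K>0$ independent of $T$ such that for all $x,y\in\mathbb R^d$ and $t\ge T$, $C^{-1}\max\{1,e^{\lambda_0t}\Gamma(\widetilde Kt,x,y)\}\le q_t(x,y)\le C\max\{1,e^{\lambda_0t}\Gamma(Kt,x,y)\}$, where $\Gamma(\tau,x,y)=\dfrac{\mathbf 1_{\{|x|,|y|>\rho\}}}{f_1(|x|)f_1(|y|)}\displaystyle\int_{\rho-1<|z|<|x|\vee|y|}f_1(|x-z|)f_1(|z-y|)e^{-\tau g(|z|)}\,dz$. Throughout, $K$ and $\widetilde K$ denote fixed constants for which this two-sided estimate holds. *)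

(* Defs.v *)
From HB Require Import structures.
From mathcomp Require Import all_boot all_order all_algebra.
From mathcomp Require Import all_classical all_reals all_analysis.
Set Implicit Arguments. Unset Strict Implicit. Unset Printing Implicit Defensive.
Import Order.TTheory GRing.Theory Num.Theory.
Local Open Scope ring_scope.

Section Profiles.
Variable R : realType.

Definition Ht (d : nat) (Kt t : R) (f g eta : R -> R) (r : R) : R :=
  f r ^+ 2 * r ^+ d.-1 * eta r * expR (Kt * t * g r).

Definition wt (Kt t : R) (g : R -> R) (r : R) : R :=
  g r ^+ 2 * expR (Kt * t * g r).

Definition vt (Kt t : R) (g eta sigma : R -> R) (r : R) : R :=
  wt Kt t g r * eta r / (r - sigma r).

Definition bratio (d : nat) (f eta : R -> R) (r : R) : R :=
  ((d.-1)%:R * ln r + ln (eta r)) / `|ln (f r)|.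

End Profiles.

(* Main.v *)
Require Import Defs.
From HB Require Import structures.
From mathcomp Require Import all_boot all_order all_algebra.
From mathcomp Require Import all_classical all_reals all_analysis.
Import Order.TTheory GRing.Theory Num.Theory numFieldNormedType.Exports.
Local Open Scope classical_set_scope.
Local Open Scope ring_scope.

From mathcomp Require Import ring lra.

Lemma nearyE (R : realType) (P : R -> Prop) :
  (\forall x \near +oo, P x) <-> exists M, forall x, M < x -> P x.
Proof.
split.
- by move=> [M [_ HM]]; exists M.
- by move=> [M HM]; exists M; split; [exact: num_real|].
Qed.

Section LS.
Local Open Scope ereal_scope.
Lemma esup_le {T : choiceType} {X : filteredType T} {R : realType} {f : X -> \bar R} {F : set_system X} (a : \bar R) :
  (\forall x \near F, f x <= a) -> limf_esup f F <= a.
Proof.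
move=> Fa; rewrite limf_esupE.
apply: (le_trans (ereal_inf_lbound _)); first by exists [set x | f x <= a].
by apply: ge_ereal_sup => _ [x /= fx <-].
Qed.

Lemma einf_ge {T : choiceType} {X : filteredType T} {R : realType} {f : X -> \bar R} {F : set_system X} (a : \bar R) :
  (\forall x \near F, a <= f x) -> a <= limf_einf f F.
Proof.
move=> Fa; rewrite limf_einfE.
apply: le_trans (ereal_sup_ubound _); last by exists [set x | a <= f x].
by apply: le_ereal_inf_tmp => _ [x /= fx <-].
Qed.

Lemma esup_lt {T : choiceType} {X : filteredType T} {R : realType} {f : X -> \bar R} {F : set_system X} {FF : Filter F} (a : \bar R) :
  limf_esup f F < a -> \forall x \near F, f x < a.
Proof.
rewrite limf_esupE => /ereal_inf_lt [_ [V FV <-]] Va.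
apply: filterS FV => x Vx; apply: le_lt_trans Va.
by apply: ereal_sup_ubound; exists x.
Qed.

Lemma einf_le_esup (T : choiceType) (X : filteredType T) (R : realType) (f : X -> \bar R) (F : set_system X) {FF : ProperFilter F} :
  limf_einf f F <= limf_esup f F.
Proof.
rewrite limf_einfE limf_esupE.
apply: ge_ereal_sup => _ [V FV <-].
apply: le_ereal_inf_tmp => _ [W FW <-].
have [x [Vx Wx]] : exists x, V x /\ W x.
  by have [x [? ?]] := filter_ex (filterI FV FW); exists x.
apply: le_trans (ereal_inf_lbound _) _; first by exists x.
by apply: ereal_sup_ubound; exists x.
Qed.
End LS.

Lemma Ht_pos (R : realType) d Kt t (f g eta : R -> R) r :
  0 < r -> 0 < f r -> 0 < eta r -> 0 < Ht d Kt t f g eta r.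
Proof.
move=> r0 f0 e0; rewrite /Ht.
by rewrite !mulr_gt0 ?exprn_gt0 ?expR_gt0.
Qed.

Lemma lnH_raw (R : realType) d Kt t (f g eta : R -> R) r :
  0 < r -> 0 < f r -> 0 < eta r ->
  ln (Ht d Kt t f g eta r) = 2 * ln (f r) + (d.-1)%:R * ln r + ln (eta r) + Kt * t * g r.
Proof.
move=> r0 f0 e0; rewrite /Ht.
rewrite lnM ?posrE ?mulr_gt0 ?exprn_gt0 ?expR_gt0 // expRK.
rewrite lnM ?posrE ?mulr_gt0 ?exprn_gt0 ?expR_gt0 //.
rewrite lnM ?posrE ?mulr_gt0 ?exprn_gt0 ?expR_gt0 //.
by rewrite !lnXn // !mulr_natl.
Qed.

Lemma lnH_phi (R : realType) d Kt t (f g eta : R -> R) r :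
  0 < r -> 0 < f r -> f r < 1 -> 0 < eta r ->
  ln (Ht d Kt t f g eta r) = (- ln (f r)) *
     (bratio d f eta r + Kt * t * (g r / `|ln (f r)|) - 2).
Proof.
move=> r0 f0 f1 e0; rewrite lnH_raw // /bratio.
have l0 : ln (f r) < 0 by rewrite ln_lt0 // f0 f1.
rewrite ltr0_norm //.
have ln0 : - ln (f r) != 0 by rewrite oppr_eq0 lt_eqF.
field; by rewrite -oppr_eq0.
Qed.

Lemma near0r (R : realType) (Q : R -> Prop) :
  (\forall s \near 0^'+, Q s) -> exists e, 0 < e /\ forall s, 0 < s -> s < e -> Q s.
Proof.
move=> /nbhs_ballP [e /= e0 He]; exists e; split => // s s0 se.
apply: He => //; rewrite /ball /= sub0r normrN ger0_norm ?ltW //.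
Qed.

Lemma near_comp (R : realType) (T : Type) (F : set_system T) (h : T -> R) (P : R -> Prop) :
  h @ F --> +oo -> (\forall r \near +oo, P r) -> \forall u \near F, P (h u).
Proof. by move=> hF Pn; exact: hF _ Pn. Qed.

Lemma fsmall (R : realType) (f finv : R -> R) :
  (forall r, 0 < r -> 0 < f r) -> (forall r s, 0 < r -> r < s -> f s < f r) ->
  (forall y, 0 < y -> 0 < finv y /\ f (finv y) = y) ->
  forall y, 0 < y -> \forall r \near +oo, f r < y.
Proof.
move=> fpos fdec finvH y y0.
have y20 : 0 < y / 2 by rewrite divr_gt0.
have [p0 fp] := finvH _ y20.
apply/nearyE; exists (finv (y / 2)) => r pr.
by apply: lt_trans (fdec _ _ p0 pr) _; rewrite fp ltr_pdivrMr // ltr_pMr // ltr1n.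
Qed.

Lemma fle_rev {R : realType} {f : R -> R} :
  (forall r s, 0 < r -> r < s -> f s < f r) ->
  forall a b, 0 < a -> 0 < b -> f a <= f b -> b <= a.
Proof.
move=> fdec a b a0 b0 fab; rewrite leNgt; apply/negP => ab.
by have := fdec _ _ a0 ab; rewrite ltNge fab.
Qed.

Lemma finj {R : realType} {f : R -> R} :
  (forall r s, 0 < r -> r < s -> f s < f r) ->
  forall a b, 0 < a -> 0 < b -> f a = f b -> a = b.
Proof.
move=> fdec a b a0 b0 fab; apply/eqP; rewrite eq_le.
by rewrite (fle_rev fdec b a b0 a0) ?fab // (fle_rev fdec a b a0 b0) ?fab.
Qed.

Lemma gle {R : realType} {g : R -> R} :
  (forall r s, 0 <= r -> r < s -> g r < g s) ->
  forall a b, 0 <= a -> a <= b -> g a <= g b.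
Proof.
move=> ginc a b a0; rewrite le_eqVlt => /predU1P [-> //| ab].
exact/ltW/ginc.
Qed.

Lemma to0r (R : realType) (h : R -> R) (c : R) (Q : R -> Prop) : 0 < c ->
  (\forall u \near +oo, 0 < h u /\ h u ^+ 2 <= c / u) ->
  (\forall s \near 0^'+, Q s) -> \forall u \near +oo, Q (h u).
Proof.
move=> c0 hH /near0r [e [e0 He]].
have e20 : 0 < e ^+ 2 by rewrite exprn_gt0.
have ue : \forall u \near +oo, c / (e ^+ 2) < u by apply/nearyE; exists (c / e ^+ 2).
near=> u.
have [hu0 hu2] : 0 < h u /\ h u ^+ 2 <= c / u by near: u.
have ue' : c / (e ^+ 2) < u by near: u.
have u0 : 0 < u by apply: lt_trans ue'; rewrite divr_gt0.
apply: He => //.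
have : c / u < e ^+ 2 by rewrite ltr_pdivrMr // mulrC -ltr_pdivrMr.
move: hu2; rewrite !expr2 => hu2 h2; nra.
Unshelve. all: end_near.
Qed.

Lemma decay (R : realType) (X : R -> R) (c δ : R) : 0 < δ ->
  (\forall u \near +oo, 0 <= X u /\ X u <= c * expR ((δ / 2) * ln u)) ->
  X u / u `^ δ @[u --> +oo] --> 0.
Proof.
move=> d0 hX.
have d20 : 0 < δ / 2 by rewrite divr_gt0.
have lim : c * expR (- ((δ / 2) * ln u)) @[u --> +oo] --> 0.
  rewrite -(mulr0 c); apply: cvgMl_tmp.
  have lnc : (δ / 2) * ln u @[u --> +oo] --> +oo.
    apply/cvgryPge => A; apply/nearyE; exists (expR (A / (δ / 2))) => u hu.
    have u0 : 0 < u by apply: lt_trans hu; exact: expR_gt0.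
    have : A / (δ / 2) <= ln u.
      by rewrite -(expRK (A / (δ / 2))) ler_ln ?posrE ?expR_gt0 // ltW.
    by rewrite ler_pdivrMr // mulrC.
  exact: (cvg_comp _ _ lnc (@cvgr_expR R)).
apply: (squeeze_cvgr _ (cvg_cst 0) lim).
have u1 : \forall u \near +oo, (0:R) < u by apply/nearyE; exists 0.
near=> u.
have [X0 Xb] : 0 <= X u /\ X u <= c * expR ((δ / 2) * ln u) by near: u.
have u0 : 0 < u by near: u.
apply/andP; split; first by rewrite divr_ge0 ?powR_ge0.
rewrite /powR gt_eqF // ler_pdivrMr ?expR_gt0 // -[X in _ <= X]mulrA -expRD.
by have -> : - (δ / 2 * ln u) + δ * ln u = δ / 2 * ln u by field.
Unshelve. all: end_near.
Qed.

Lemma ege1 (R : realType) (X : \bar R) :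
  (forall e : R, 0 < e -> ((1 - e)%:E <= X)%E) -> (1%:E <= X)%E.
Proof.
case: X => [r| |] H.
- rewrite lee_fin; rewrite leNgt; apply/negP => r1.
  have := H ((1 - r) / 2) ltac:(lra); rewrite lee_fin; lra.
- exact: leey.
- by have := H 1 ltr01.
Qed.

Lemma ele (R : realType) (X : \bar R) (y : R) :
  (forall e : R, 0 < e -> (X <= (y + e)%:E)%E) -> (X <= y%:E)%E.
Proof.
case: X => [r| |] H.
- rewrite lee_fin; rewrite leNgt; apply/negP => r1.
  have := H ((r - y) / 2) ltac:(lra); rewrite lee_fin; lra.
- by have := H 1 ltr01.
- exact: leNye.
Qed.

Lemma sq4 (R : realType) (x : R) : 0 <= x -> x ^+ 2 <= 4 * expR x.
Proof.
move=> x0.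
have -> : expR x = expR (x / 2) ^+ 2 by rewrite expr2 -expRD; congr expR; field.
have := expR_ge1Dx (x / 2).
have : 0 <= x / 2 by rewrite divr_ge0.
rewrite !expr2; nra.
Qed.

Theorem lemma5p1 (R : realType) (d : nat) (f g finv eta sigma : R -> R)
  (C6 R0 omega Kt t kappa kappat b : R) :
  (1 <= d)%N ->
  (* standing properties of f and g coming from (A) *)
  (forall r, 0 < r -> 0 < f r) ->
  {in `]0, +oo[, continuous f} ->
  (forall r s, 0 < r -> r < s -> f s < f r) ->
  (forall y, 0 < y -> 0 < finv y /\ f (finv y) = y) ->
  (forall r, 0 <= r -> 0 < g r) ->
  {within `[0, +oo[, continuous g} ->
  (forall r s, 0 <= r -> r < s -> g r < g s) ->
  g r @[r --> +oo] --> +oo ->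
  (* (A3) *)
  1 <= C6 -> 0 < R0 -> (forall r, R0 <= r -> g (r + 1) <= C6 * g r) ->
  (* (D) *)
  (exists r0, forall r s, r0 <= r -> r <= s ->
       g s / `|ln (f s)| <= g r / `|ln (f r)|) ->
  g r / `|ln (f r)| @[r --> +oo] --> 0 ->
  (* the profile condition with exponent omega *)
  0 <= omega ->
  (forall c lam, 0 < c -> 1 <= lam ->
     (limf_esup (fun s => (g (finv (c * s `^ lam)) / g (finv s))%:E) (0^'+)
       <= (lam `^ omega)%:E)%E) ->
  (* constants *)
  0 < Kt -> 0 < t -> 0 < kappa -> 0 < kappat ->
  (* eta and sigma *)
  (forall r, 0 <= r -> 0 < eta r) ->
  {within `[0, +oo[, continuous eta} ->
  (forall r s, 0 <= r -> r <= s -> eta r <= eta s) ->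
  (forall r, 0 <= r -> 0 < sigma r) ->
  {within `[0, +oo[, continuous sigma} ->
  (forall r s, 0 <= r -> r <= s -> sigma r <= sigma s) ->
  (@lebesgue_measure R).-integrable `]1, +oo[ (fun x => ((eta x)^-1)%:E) ->
  (forall r, 1 <= r -> sigma r < r) ->
  (exists M, forall r, 1 <= r -> f (sigma r) / f r <= M) ->
  (exists r0, forall r s, r0 <= r -> r <= s ->
       bratio d f eta s <= bratio d f eta r) ->
  bratio d f eta r @[r --> +oo] --> b ->
  0 <= b -> b < 2 ->
  (* conclusions *)
  ((* (a): two-sided bound on H_t *)
   (forall eps, 0 < eps -> eps < 2 - b ->
     exists reps, 0 < reps /\ forall r, reps < r ->
       f r ^+ 2 <= Ht d Kt t f g eta r /\
       Ht d Kt t f g eta r <= f r `^ (2 - b - eps))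
   (* existence of a half-line where H_t is continuous and strictly decreasing *)
   /\ (exists r0, 0 < r0 /\ {in `[r0, +oo[, continuous (Ht d Kt t f g eta)} /\
         forall r s, r0 <= r -> r < s ->
           Ht d Kt t f g eta s < Ht d Kt t f g eta r)
   /\
   (* for any such half-line, gamma_t = H_t^{-1}(kappat / .) there, and
      alpha_t = (f^2)^{-1}(kappa / .) *)
   forall (r0 : R) (gamma alpha : R -> R),
     {in `[r0, +oo[, continuous (Ht d Kt t f g eta)} ->
     (forall r s, r0 <= r -> r < s ->
        Ht d Kt t f g eta s < Ht d Kt t f g eta r) ->
     (\forall u \near +oo, r0 <= gamma u /\ Ht d Kt t f g eta (gamma u) = kappat / u) ->
     (\forall u \near +oo, 0 < alpha u /\ f (alpha u) ^+ 2 = kappa / u) ->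
     ((1%:E <= limf_einf (fun u => (g (gamma u) / g (alpha u))%:E) (+oo_R)%R)%E /\
      (limf_einf (fun u => (g (gamma u) / g (alpha u))%:E) (+oo_R)%R
         <= limf_esup (fun u => (g (gamma u) / g (alpha u))%:E) (+oo_R)%R)%E /\
      (limf_esup (fun u => (g (gamma u) / g (alpha u))%:E) (+oo_R)%R
         <= ((2 / (2 - b)) `^ omega)%:E)%E /\
      (forall delta, 0 < delta ->
         wt Kt t g (gamma u) / u `^ delta @[u --> +oo] --> 0)) /\
     (* (b) *)
     ((ln (eta r) - ln (r - sigma r)) / g r @[r --> +oo] --> 0 ->
      ((ln (eta (gamma u)) - ln (gamma u - sigma (gamma u))) / g (alpha u)
         @[u --> +oo] --> 0) /\
      (forall delta, 0 < delta ->
         vt Kt t g eta sigma (gamma u) / u `^ delta @[u --> +oo] --> 0))).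
Proof.
move=> d1 fpos fcont fdec finvH gpos gcont ginc gcvg C61 R0pos A3 [rD HD] Dcvg
  om0 prof Kt0 t0 ka0 kat0 epos econt einc spos scont sinc eint slt [Msig HM]
  [rB HB] Bcvg b0 b2.
set H := Ht d Kt t f g eta.
pose G r := g r / `|ln (f r)|.
pose phi r := bratio d f eta r + Kt * t * G r - 2.
have Ktt0 : 0 < Kt * t by rewrite mulr_gt0.
have phic : phi r @[r --> +oo] --> b - 2.
  have := cvgB (cvgD Bcvg (cvgMl_tmp (a := Kt * t) Dcvg)) (cvg_cst (2:R)).
  by rewrite mulr0 addr0; apply; typeclasses eauto.
have phic_lt c : b - 2 < c -> \forall r \near +oo, phi r < c.
  by move=> bc; apply: (cvgr_lt (b - 2)).
have Gsmall e : 0 < e -> \forall r \near +oo, G r < e.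
  by move=> e0; apply: (cvgr_lt 0) => //.
have f1 : \forall r \near +oo, f r < 1 by exact: fsmall finvH _ ltr01.
have r1 : \forall r \near +oo%R, (1:R) <= r by apply/nearyE; exists 1 => r /ltW.
have lnHE r : 1 <= r -> f r < 1 -> ln (H r) = (- ln (f r)) * phi r.
  move=> r1' fr1; have r0 : 0 < r by apply: lt_le_trans r1'.
  by rewrite /H lnH_phi // ?fpos // epos // ltW.
have Hpos r : 0 < r -> 0 < H r.
  by move=> r0; rewrite /H Ht_pos ?fpos ?epos // ltW.
have eta1 : 0 < eta 1 by rewrite epos.
have partA1 : forall eps, 0 < eps -> eps < 2 - b ->
     exists reps, 0 < reps /\ forall r, reps < r ->
       f r ^+ 2 <= H r /\ H r <= f r `^ (2 - b - eps).
  move=> eps e0 eb.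
  have gbig : \forall r \near +oo, - ln (eta 1) / (Kt * t) <= g r.
    by move: gcvg => /cvgryPge; apply.
  have : \forall r \near +oo, [/\ 1 <= r, f r < 1,
          phi r < - (2 - b - eps) & - ln (eta 1) / (Kt * t) <= g r].
    near=> r; split; near: r => //.
    by apply: phic_lt; lra.
  move=> /nearyE [M HMr]; exists (Num.max M 1); split.
    by rewrite lt_max ltr01 orbT.
  move=> r; rewrite gt_max => /andP [Mr _].
  have [r1' fr1 phr gr] := HMr r Mr.
  have r0 : 0 < r by apply: lt_le_trans r1'.
  have fr0 := fpos r r0.
  have lnf0 : ln (f r) < 0 by rewrite ln_lt0 // fr0 fr1.
  split.
    rewrite -ler_ln ?posrE ?exprn_gt0 ?Hpos // lnXn // /H lnH_raw // ?epos ?(ltW r0) //.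
    have h1 : 0 <= (d.-1)%:R * ln r by rewrite mulr_ge0 ?ln_ge0.
    have h2 : ln (eta 1) <= ln (eta r) by rewrite ler_ln ?posrE ?epos ?einc ?(ltW r0).
    have h3 : - ln (eta 1) <= Kt * t * g r.
      by rewrite -ler_pdivrMl // mulrC.
    rewrite mulr2n; lra.
  rewrite -ler_ln ?posrE ?powR_gt0 ?Hpos // ln_powR lnHE //.
  have : - ln (f r) * phi r <= - ln (f r) * (- (2 - b - eps)).
    by rewrite ler_pM2l ?oppr_gt0 // ltW.
  lra.
have gc : {in `]0, +oo[, continuous g}.
  by have [] := (continuous_within_itvcyP 0 g).1 gcont.
have ec : {in `]0, +oo[, continuous eta}.
  by have [] := (continuous_within_itvcyP 0 eta).1 econt.
have Hcont r : 0 < r -> {for r, continuous H}.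
  move=> r0.
  have rin : r \in `]0, +oo[ by rewrite in_itv /= andbT.
  rewrite /H /Ht.
  apply: continuousM; last first.
    apply: (@continuous_comp _ _ _ (fun x => Kt * t * g x) expR); last exact: continuous_expR.
    by apply: continuousM; [exact: cvg_cst | exact: gc].
  apply: continuousM; last exact: ec.
  apply: continuousM; last exact: exprn_continuous.
  apply: (@continuous_comp _ _ _ f (fun x => x ^+ 2)); last exact: exprn_continuous.
  exact: fcont.
have partA2 : exists r0, 0 < r0 /\ {in `[r0, +oo[, continuous H} /\
     forall r s, r0 <= r -> r < s -> H s < H r.
  have : \forall r \near +oo%R, [/\ (1:R) <= r, f r < 1, phi r < 0, rD <= r & rB <= r].
    near=> r; split; near: r => //.
    - by apply: phic_lt; lra.
    - by apply/nearyE; exists rD => r /ltW.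
    - by apply/nearyE; exists rB => r /ltW.
  move=> /nearyE [M HMr].
  have key r : M + 1 <= r -> [/\ (1:R) <= r, f r < 1, phi r < 0, rD <= r & rB <= r].
    by move=> Mr; apply: HMr; apply: lt_le_trans Mr; rewrite ltrDl.
  have M1 : 1 <= M + 1 by have [] := key (M + 1) (lexx _).
  exists (M + 1); split; first by apply: lt_le_trans M1.
  split.
    move=> r; rewrite in_itv /= andbT => Mr; apply: Hcont.
    by apply: lt_le_trans Mr; apply: lt_le_trans M1.
  move=> r s Mr rs.
  have [r1' fr1 phr rDr rBr] := key r Mr.
  have [s1' fs1 phs rDs rBs] := key s (le_trans Mr (ltW rs)).
  have r0 : 0 < r by apply: lt_le_trans r1'.
  have s0 : 0 < s by apply: lt_trans rs.
  rewrite -ltr_ln ?posrE ?Hpos //. rewrite !lnHE //.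
  have lfs : ln (f s) < ln (f r) by rewrite ltr_ln ?posrE ?fpos ?fdec.
  have lfr : ln (f r) < 0 by rewrite ln_lt0 // fpos // fr1.
  have Gsr : G s <= G r by exact: HD rDr (ltW rs).
  have Bsr : bratio d f eta s <= bratio d f eta r by exact: HB rBr (ltW rs).
  have phsr : phi s <= phi r.
    rewrite /phi lerD2r lerD // ler_pM2l //.
  nra.
split; first exact: partA1.
split; first exact: partA2.
move=> r0' gamma alpha Hc' Hdec' hgam halp.
have upos : \forall u \near +oo%R, (0:R) < u by apply/nearyE; exists 0.
have gcv : gamma u @[u --> +oo] --> +oo.
  apply/cvgryPge => A.
  pose M := Num.max A (Num.max r0' 1).
  have M1 : 1 <= M by rewrite !le_max lexx !orbT.
  have M0 : 0 < M by apply: lt_le_trans M1.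
  have HM0 := Hpos M M0.
  have hu : \forall u \near +oo%R, kappat / H M < u by apply/nearyE; exists (kappat / H M).
  near=> u.
  have [g0 gH] : r0' <= gamma u /\ H (gamma u) = kappat / u by near: u.
  have u' : kappat / H M < u by near: u.
  have u0 : 0 < u by apply: lt_trans u'; rewrite divr_gt0.
  have ku : kappat / u < H M by rewrite ltr_pdivrMr // mulrC -ltr_pdivrMr.
  have : M <= gamma u.
    rewrite leNgt; apply/negP => gM.
    by have := Hdec' _ _ g0 gM; rewrite gH ltNge (ltW ku).
  by apply: le_trans; rewrite le_max lexx.
have tr P : (\forall r \near +oo%R, P r) -> \forall u \near +oo%R, P (gamma u).
  exact: near_comp gcv.
have e1 : 0 < (2 - b) / 2 by lra.
have e2 : (2 - b) / 2 < 2 - b by lra.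
have fH : \forall r \near +oo%R, f r ^+ 2 <= H r.
  have [reps [_ Hr]] := partA1 _ e1 e2.
  by apply/nearyE; exists reps => r /Hr [].
have fg0 Q : (\forall s \near 0^'+, Q s) -> \forall u \near +oo%R, Q (f (gamma u)).
  apply: (@to0r R (fun u => f (gamma u)) kappat Q kat0).
  near=> u.
  have [g0 gH] : r0' <= gamma u /\ H (gamma u) = kappat / u by near: u.
  have g1 : 1 <= gamma u by near: u; exact: tr _ r1.
  have fh : f (gamma u) ^+ 2 <= H (gamma u) by near: u; exact: tr _ fH.
  by split; [apply: fpos; apply: lt_le_trans g1 | rewrite -gH].
have fa0 Q : (\forall s \near 0^'+, Q s) -> \forall u \near +oo%R, Q (f (alpha u)).
  apply: (@to0r R (fun u => f (alpha u)) kappa Q ka0).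
  near=> u.
  have [a0 fa] : 0 < alpha u /\ f (alpha u) ^+ 2 = kappa / u by near: u.
  by split; [apply: fpos | rewrite fa].
have finvE x : 0 < x -> x = finv (f x).
  move=> x0; have [p0 fp] := finvH _ (fpos _ x0).
  by apply: (finj fdec) => //; rewrite fp.
have gfacts : \forall u \near +oo%R, [/\ 0 < u, 1 <= gamma u, f (gamma u) < 1,
    H (gamma u) = kappat / u & f (gamma u) ^+ 2 <= H (gamma u)].
  near=> u; split.
  - by near: u.
  - by near: u; exact: tr _ r1.
  - by near: u; exact: tr _ f1.
  - by have [] : r0' <= gamma u /\ H (gamma u) = kappat / u by near: u.
  - by near: u; exact: tr _ fH.
have afacts : \forall u \near +oo%R, 0 < alpha u /\ f (alpha u) ^+ 2 = kappa / u.
  by [].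
pose C := Num.sqrt (Num.max (kappat / kappa) 1).
have Cm : 1 <= Num.max (kappat / kappa) 1 by rewrite le_max lexx orbT.
have C1 : 1 <= C by rewrite -{1}sqrtr1 ler_sqrt // (le_trans ler01 Cm).
have C0 : 0 < C by apply: lt_le_trans C1.
have C2 : kappat / kappa <= C ^+ 2.
  by rewrite sqr_sqrtr ?(le_trans ler01 Cm) // le_max lexx.
have liminf1 : (1%:E <= limf_einf (fun u => (g (gamma u) / g (alpha u))%:E) +oo_R)%E.
  apply: ege1 => e e0.
  apply: einf_ge.
  have prof1 := prof (C^-1) 1 (ltac:(by rewrite invr_gt0)) (lexx 1).
  rewrite powR1 /= in prof1.
  have Qlt : \forall s \near (0:R)^'+,
      ((g (finv (C^-1 * s `^ 1)) / g (finv s))%:E < (1 + e)%:E)%E.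
    by apply: esup_lt; apply: le_lt_trans prof1 _; rewrite lte_fin ltrDl.
  have Qu := fg0 _ Qlt.
  near=> u.
  have Qs : g (finv (C^-1 * f (gamma u) `^ 1)) / g (finv (f (gamma u))) < 1 + e.
    by rewrite -lte_fin; near: u; exact: Qu.
  have [u0 g1 fg1 gH fh] : [/\ 0 < u, 1 <= gamma u, f (gamma u) < 1,
    H (gamma u) = kappat / u & f (gamma u) ^+ 2 <= H (gamma u)] by near: u.
  have [a0 fa] : 0 < alpha u /\ f (alpha u) ^+ 2 = kappa / u by near: u.
  set γ := gamma u in Qs g1 fg1 gH fh *.
  set α := alpha u in a0 fa *.
  have γ0 : 0 < γ by apply: lt_le_trans g1.
  have s0 : 0 < f γ := fpos _ γ0.
  have fal0 : 0 < f α := fpos _ a0.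
  have gE := finvE _ γ0.
  rewrite powRr1 ?(ltW s0) // -gE in Qs.
  have gg0 := gpos γ (ltW γ0).
  have ga0 := gpos α (ltW a0).
  rewrite ltr_pdivrMr // in Qs.
  have sC : f γ <= C * f α.
    have h1 : f γ ^+ 2 <= kappat / u by rewrite -gH.
    have h2 : kappat / u = (kappat / kappa) * (kappa / u).
      by field; rewrite !gt_eqF.
    have h3 : (kappat / kappa) * (kappa / u) <= C ^+ 2 * f α ^+ 2.
      by rewrite fa ler_wpM2r // ltW // divr_gt0.
    have h4 : 0 < C * f α by rewrite mulr_gt0.
    move: h1 h3; rewrite h2 !expr2 => h1 h3; nra.
  have Cs0 : 0 < C^-1 * f γ by rewrite mulr_gt0 ?invr_gt0.
  have [fin1 fin2] := finvH _ Cs0.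
  have aα : α <= finv (C^-1 * f γ).
    apply: (fle_rev fdec _ _ fin1 a0); rewrite fin2.
    by rewrite -(ler_pM2l C0) mulrA mulfV ?mul1r // gt_eqF.
  have gαle := gle ginc α _ (ltW a0) aα.
  rewrite lee_fin ler_pdivlMr //.
  have [ee|ee] := leP e 1; nra.
have lnkt u : 0 < u -> ln (kappat / u) = ln kappat - ln u.
  by move=> u0; rewrite lnM ?posrE ?invr_gt0 // lnV ?posrE.
have lnk u : 0 < u -> ln (kappa / u) = ln kappa - ln u.
  by move=> u0; rewrite lnM ?posrE ?invr_gt0 // lnV ?posrE.
have Fub p : 0 < p -> p < 2 - b -> forall δ, 0 < δ ->
    \forall u \near +oo%R, g (gamma u) / g (alpha u) <= (2 / p) `^ omega + δ.
  move=> p0 pb δ δ0.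
  have lam1 : 1 <= 2 / p by rewrite ler_pdivlMr // mul1r; lra.
  pose c := expR ((ln kappat - ln kappa) / p).
  have pr := prof c (2 / p) (expR_gt0 _) lam1.
  have Plt : \forall s \near (0:R)^'+,
      ((g (finv (c * s `^ (2 / p))) / g (finv s))%:E < ((2 / p) `^ omega + δ)%:E)%E.
    by apply: esup_lt; apply: le_lt_trans pr _; rewrite lte_fin ltrDl.
  have Pu := fa0 _ Plt.
  have phg := tr _ (phic_lt (- p) ltac:(lra)).
  near=> u.
  have Ps : g (finv (c * f (alpha u) `^ (2 / p))) / g (finv (f (alpha u))) < (2 / p) `^ omega + δ.
    by rewrite -lte_fin; near: u; exact: Pu.
  have [u0 g1 fg1 gH fh] : [/\ 0 < u, 1 <= gamma u, f (gamma u) < 1,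
    H (gamma u) = kappat / u & f (gamma u) ^+ 2 <= H (gamma u)] by near: u.
  have [a0 fa] : 0 < alpha u /\ f (alpha u) ^+ 2 = kappa / u by near: u.
  have phu : phi (gamma u) < - p by near: u.
  set γ := gamma u in Ps g1 fg1 gH fh phu *.
  set α := alpha u in Ps a0 fa *.
  have γ0 : 0 < γ by apply: lt_le_trans g1.
  have s0 : 0 < f γ := fpos _ γ0.
  have fal0 : 0 < f α := fpos _ a0.
  rewrite -(finvE _ a0) in Ps.
  have gg0 := gpos γ (ltW γ0).
  have ga0 := gpos α (ltW a0).
  have lfg : ln kappat - ln u <= p * ln (f γ).
    rewrite -lnkt // -gH lnHE //.
    have lf0 : ln (f γ) < 0 by rewrite ln_lt0 // s0 fg1.
    have : - ln (f γ) * phi γ <= - ln (f γ) * (- p).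
      by rewrite ler_pM2l ?oppr_gt0 // ltW.
    lra.
  have ls : 2 * ln (f α) = ln kappa - ln u.
    by rewrite -lnk // -fa lnXn // mulr_natl.
  have cs0 : 0 < c * f α `^ (2 / p) by rewrite mulr_gt0 ?expR_gt0 ?powR_gt0.
  have key : c * f α `^ (2 / p) <= f γ.
    rewrite -ler_ln ?posrE // lnM ?posrE ?expR_gt0 ?powR_gt0 // expRK ln_powR.
    have -> : (ln kappat - ln kappa) / p + 2 / p * ln (f α) = (ln kappat - ln u) / p.
      by rewrite mulrAC ls; field; rewrite gt_eqF.
    by rewrite ler_pdivrMr // mulrC.
  have [fin1 fin2] := finvH _ cs0.
  have gγle : γ <= finv (c * f α `^ (2 / p)).
    by apply: (fle_rev fdec _ _ fin1 γ0); rewrite fin2.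
  have gle' := gle ginc γ _ (ltW γ0) gγle.
  rewrite ltr_pdivrMr // in Ps.
  rewrite ler_pdivrMr //.
  exact: le_trans gle' (ltW Ps).
have limsup2 : (limf_esup (fun u => (g (gamma u) / g (alpha u))%:E) +oo_R
     <= ((2 / (2 - b)) `^ omega)%:E)%E.
  apply: ele => δ δ0.
  pose T := (2 / (2 - b)) `^ omega.
  have T0 : 0 < T by apply: powR_gt0; rewrite divr_gt0 //; lra.
  have dT : 0 < δ / (2 * T) by rewrite divr_gt0 ?mulr_gt0.
  pose θ := ln (1 + δ / (2 * T)) / (omega + 1).
  have L0 : 0 < ln (1 + δ / (2 * T)) by rewrite ln_gt0 //; lra.
  have θ0 : 0 < θ by rewrite divr_gt0 //; lra.
  pose p := (2 - b) * expR (- θ).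
  have p0 : 0 < p by rewrite mulr_gt0 ?expR_gt0 //; lra.
  have pb : p < 2 - b by rewrite /p gtr_pMr ?expR_lt1 ?oppr_lt0 //; lra.
  have ub := Fub p p0 pb (δ / 2) ltac:(by rewrite divr_gt0).
  have hp : (2 / p) `^ omega <= T + δ / 2.
    have -> : 2 / p = 2 / (2 - b) * expR θ.
      by rewrite /p expRN; field; rewrite !gt_eqF ?expR_gt0 // subr_gt0.
    rewrite powRM ?expR_ge0 ?divr_ge0 //; last lra.
    have -> : expR θ `^ omega = expR (omega * θ) by rewrite /powR gt_eqF ?expR_gt0 // expRK.
    have h : expR (omega * θ) <= 1 + δ / (2 * T).
      rewrite -[X in _ <= X]lnK ?posrE; last lra.
      rewrite ler_expR /θ mulrA ler_pdivrMr; last lra.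
      nra.
    apply: le_trans (ler_wpM2l (ltW T0) h) _.
    have -> : T * (1 + δ / (2 * T)) = T + δ / 2 by field; rewrite gt_eqF.
    exact: lexx.
  apply: (le_trans (esup_le (((2 / p) `^ omega + δ / 2)%:E) _)).
    by apply: filterS ub => u hu; rewrite lee_fin.
  rewrite lee_fin; move: hp; rewrite /T; lra.
have gbound A δ : 0 < A -> 0 < δ ->
    \forall u \near +oo%R, A * g (gamma u) <= (δ / 2) * (ln u - ln kappat).
  move=> A0 δ0.
  pose p0 := (2 - b) / 2.
  pose ε := δ * p0 / (2 * A).
  have ε0 : 0 < ε by rewrite /ε /p0; apply: divr_gt0; apply: mulr_gt0 => //; lra.
  have phg := tr _ (phic_lt (- p0) ltac:(rewrite /p0; lra)).
  have Gg := tr _ (Gsmall ε ε0).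
  near=> u.
  have [u0 g1 fg1 gH fh] : [/\ 0 < u, 1 <= gamma u, f (gamma u) < 1,
    H (gamma u) = kappat / u & f (gamma u) ^+ 2 <= H (gamma u)] by near: u.
  have phu : phi (gamma u) < - p0 by near: u.
  have Gu : G (gamma u) < ε by near: u.
  set γ := gamma u in g1 fg1 gH fh phu Gu *.
  have γ0 : 0 < γ by apply: lt_le_trans g1.
  have s0 : 0 < f γ := fpos _ γ0.
  have lf0 : ln (f γ) < 0 by rewrite ln_lt0 // s0 fg1.
  have hL : p0 * (- ln (f γ)) <= ln u - ln kappat.
    have : ln kappat - ln u = - ln (f γ) * phi γ by rewrite -lnkt // -gH lnHE.
    have : - ln (f γ) * phi γ <= - ln (f γ) * (- p0).
      by rewrite ler_pM2l ?oppr_gt0 // ltW.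
    lra.
  have hg : g γ = G γ * (- ln (f γ)).
    by rewrite /G ltr0_norm // divfK // oppr_eq0 lt_eqF.
  rewrite hg.
  have h1 : A * (G γ * (- ln (f γ))) <= A * (ε * (- ln (f γ))).
    by rewrite ler_pM2l // ler_pM2r ?oppr_gt0 // ltW.
  have h2 : A * (ε * (- ln (f γ))) = δ / 2 * (p0 * (- ln (f γ))).
    by rewrite /ε; field; rewrite gt_eqF.
  have h3 : δ / 2 * (p0 * (- ln (f γ))) <= δ / 2 * (ln u - ln kappat).
    by rewrite ler_pM2l // divr_gt0.
  by apply: le_trans h1 _; rewrite h2.
have wtlim δ : 0 < δ -> wt Kt t g (gamma u) / u `^ δ @[u --> +oo] --> 0.
  move=> δ0.
  apply: (@decay R (fun u => wt Kt t g (gamma u)) (4 * expR (- (δ / 2 * ln kappat))) δ δ0).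
  have gb := gbound (Kt * t + 1) δ ltac:(lra) δ0.
  near=> u.
  have gbu : (Kt * t + 1) * g (gamma u) <= δ / 2 * (ln u - ln kappat) by near: u.
  have g1 : 1 <= gamma u by near: u; exact: tr _ r1.
  have gg0 : 0 < g (gamma u) by apply: gpos; apply: le_trans g1.
  split; first by rewrite /wt mulr_ge0 ?expR_ge0 // sqr_ge0.
  rewrite /wt; apply: le_trans (ler_wpM2r (expR_ge0 _) (@sq4 R _ (ltW gg0))) _.
  rewrite -!mulrA -!expRD ler_pM2l // ler_expR.
  lra.
split.
  split; first exact: liminf1.
  split; first exact: einf_le_esup.
  split; first exact: limsup2.
  exact: wtlim.
move=> Rb.
have Rn e : 0 < e -> \forall u \near +oo%R,
    `|(ln (eta (gamma u)) - ln (gamma u - sigma (gamma u))) / g (gamma u)| < e.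
  move=> e0.
  apply: (tr (fun r => `|(ln (eta r) - ln (r - sigma r)) / g r| < e)).
  exact: (cvgr0Pnorm_lt _).1 Rb e e0.
split.
  apply/cvgr0Pnorm_lt => e e0.
  pose K := (2 / ((2 - b) / 2)) `^ omega + 1.
  have K0 : 0 < K by rewrite /K ltr_pwDr ?powR_ge0.
  have Fb := Fub _ e1 e2 1 ltr01.
  have Ru := Rn (e / K) (divr_gt0 e0 K0).
  near=> u.
  have Fu : g (gamma u) / g (alpha u) <= K by near: u.
  have Ruu : `|(ln (eta (gamma u)) - ln (gamma u - sigma (gamma u))) / g (gamma u)| < e / K.
    by near: u.
  have g1 : 1 <= gamma u by near: u; exact: tr _ r1.
  have [a0 fa] : 0 < alpha u /\ f (alpha u) ^+ 2 = kappa / u by near: u.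
  set γ := gamma u in Fu Ruu g1 *.
  set α := alpha u in Fu a0 *.
  set N := ln (eta γ) - ln (γ - sigma γ) in Ruu *.
  have gg0 : 0 < g γ by apply: gpos; apply: le_trans g1.
  have ga0 : 0 < g α by apply: gpos; apply: ltW.
  have -> : N / g α = (N / g γ) * (g γ / g α) by field; rewrite !gt_eqF.
  rewrite normrM (ger0_norm (divr_ge0 (ltW gg0) (ltW ga0))).
  rewrite ltr_pdivlMr // in Ruu.
  apply: le_lt_trans Ruu.
  by rewrite ler_wpM2l.
move=> δ δ0.
apply: (@decay R (fun u => vt Kt t g eta sigma (gamma u)) (4 * expR (- (δ / 2 * ln kappat))) δ δ0).
have gb := gbound (Kt * t + 2) δ ltac:(lra) δ0.
have Ru := Rn 1 ltr01.
near=> u.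
have gbu : (Kt * t + 2) * g (gamma u) <= δ / 2 * (ln u - ln kappat) by near: u.
have Ruu : `|(ln (eta (gamma u)) - ln (gamma u - sigma (gamma u))) / g (gamma u)| < 1.
  by near: u.
have g1 : 1 <= gamma u by near: u; exact: tr _ r1.
set γ := gamma u in gbu Ruu g1 *.
set N := ln (eta γ) - ln (γ - sigma γ) in Ruu *.
have gg0 : 0 < g γ by apply: gpos; apply: le_trans g1.
have eg0 : 0 < eta γ by apply: epos; apply: le_trans g1.
have ds0 : 0 < γ - sigma γ by rewrite subr_gt0; exact: slt.
have NL : N < g γ.
  by move: (ltr_normlW Ruu); rewrite ltr_pdivrMr // mul1r.
have eqN : eta γ / (γ - sigma γ) = expR N.
  by rewrite /N expRD expRN !lnK ?posrE.
have wt0 : 0 <= wt Kt t g γ by rewrite /wt mulr_ge0 ?expR_ge0 // sqr_ge0.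
split; first by rewrite /vt divr_ge0 // ?mulr_ge0 // ltW.
have -> : vt Kt t g eta sigma γ = g γ ^+ 2 * (expR (Kt * t * g γ) * expR N).
  by rewrite /vt /wt -!mulrA eqN.
rewrite -expRD.
apply: le_trans (ler_wpM2r (expR_ge0 _) (@sq4 R _ (ltW gg0))) _.
rewrite -!mulrA -!expRD ler_pM2l // ler_expR.
lra.
Unshelve. all: end_near.
Qed.
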